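(* There exists an absolute constant $\alpha_0>0$ such that for every $T>0$, every $\alpha>\alpha_0/\sqrt{T}$ and every $t\in[0,T]$, \[ \lim_{n\to\infty}\mathbb P\Big(\sup_{1\le j\le n}\sup_{s\le t}\big|\dot{\tilde\beta}^n_j(s)\big|\ge \alpha n^{1/2}2^{n/2}\Big)=\lim_{n\to\infty}\mathbb P\Big(\sup_{s\le t}\big|\dot{\widetilde W}^n(s)\big|_{H_0}\ge \alpha\, n\, 2^{n/2}\Big)=0 . \]
   Context: Let $H$ be a separable Hilbert space with norm $|\cdot|$, $Q$ a positive trace-class operator on $H$ with orthonormal eigenbasis $(e_j)_{j\ge1}$, $Qe_j=q_je_j$. Let $H_0=Q^{1/2}H$ with norm $|\phi|_{H_0}=|Q^{-1/2}\phi|$. Let $(\beta_j)_{j\ge1}$ be independent standard real Brownian motions on a probability space $(\Omega,\mathcal F,\mathbb P)$. Fix $T>0$. For integers $n\ge1$ and $k=0,\dots,2^n$ put $t_k=kT2^{-n}$, and for $s\in[t_k,t_{k+1})$ set $\underline s_n=t_k$ and $s_n=t_{k-1}\vee0$ (with $t_{-1}:=0$). Define $\dot{\tilde\beta}^n_j(s)=T^{-1}2^n\big(\beta_j(\underline s_n)-\beta_j(s_n)\big)$ for $s\in[0,T]$, and $\dot{\widetilde W}^n(s)=\sum_{1\le j\le n}\dot{\tilde\beta}^n_j(s)\,q_j^{1/2}e_j$ (an $H_0$-valued process). *)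

(* Defs.v *)
From HB Require Import structures.
From mathcomp Require Import all_boot all_order all_algebra.
From mathcomp Require Import all_classical all_reals all_analysis.
Set Implicit Arguments. Unset Strict Implicit. Unset Printing Implicit Defensive.
Import Order.TTheory GRing.Theory Num.Theory.
Import numFieldNormedType.Exports.
Local Open Scope classical_set_scope.
Local Open Scope ring_scope.

Section defs.
Context {R : realType} {d : measure_display} {Omega : measurableType d}.
Variable P : probability Omega R.

Definition mutually_independent (I : Type) (D : set I)
    (F : I -> set (set Omega)) : Prop :=
  forall (m : nat) (idx : 'I_m -> I), injective idx -> (forall k, D (idx k)) ->
  forall A : 'I_m -> set Omega, (forall k, F (idx k) (A k)) ->
  P (\bigcap_(k in [set: 'I_m]) A k) = (\prod_(k < m) P (A k))%E.

Definition sigma_rv (X : Omega -> R) : set (set Omega) :=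
  preimage_set_system setT X measurable.

Definition sigma_proc (X : R -> Omega -> R) : set (set Omega) :=
  <<s \bigcup_(t in [set t : R | 0 <= t]) sigma_rv (X t) >>.

Definition standard_BM (B : R -> Omega -> R) : Prop :=
  [/\ (forall t, 0 <= t -> measurable_fun setT (B t)),
      {ae P, forall w, B 0 w = 0},
      (forall s t, 0 <= s -> s < t -> forall A : set R, measurable A ->
         P ((fun w => B t w - B s w) @^-1` A) = normal_prob 0 (Num.sqrt (t - s)) A),
      (forall (m : nat) (tm : 'I_m.+1 -> R),
         (forall k, 0 <= tm k) -> (forall k l : 'I_m.+1, (k <= l)%N -> tm k <= tm l) ->
         mutually_independent [set: 'I_m]
           (fun k => sigma_rv (fun w => B (tm (lift ord0 k)) w
                                        - B (tm (widen_ord (leqnSn m) k)) w)))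
    & {ae P, forall w, {within [set t : R | 0 <= t], continuous (fun t => B t w)}}].

Definition indep_std_BMs (beta : nat -> R -> Omega -> R) : Prop :=
  (forall j, (1 <= j)%N -> standard_BM (beta j)) /\
  mutually_independent [set j | (1 <= j)%N] (fun j => sigma_proc (beta j)).

End defs.

Section grid.
Context {R : realType}.

(** for s in [t_k, t_{k+1}), t_k = k T 2^-n :  underline s_n = t_k *)
Definition grid_lo (T : R) (n : nat) (s : R) : R :=
  (Num.floor (s * 2 ^+ n / T))%:~R * (T / 2 ^+ n).

Definition grid_prev (T : R) (n : nat) (s : R) : R :=
  Num.max (grid_lo T n s - T / 2 ^+ n) 0.

Definition tbeta_dot {Omega : Type} (beta : nat -> R -> Omega -> R)
    (T : R) (n j : nat) (s : R) (w : Omega) : R :=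
  (2 ^+ n / T) * (beta j (grid_lo T n s) w - beta j (grid_prev T n s) w).

End grid.

Section hilbert.
Context {R : realType} {V : lmodType R}.

Definition inner_product (ip : V -> V -> R) : Prop :=
  [/\ (forall x y, ip x y = ip y x),
      (forall (a : R) x y z, ip (a *: x + y) z = a * ip x z + ip y z),
      (forall x, 0 <= ip x x) & (forall x, ip x x = 0 -> x = 0)].

Definition ip_norm (ip : V -> V -> R) (x : V) : R := Num.sqrt (ip x x).

Definition orthonormal_basis (ip : V -> V -> R) (e : nat -> V) : Prop :=
  (forall j k, (1 <= j)%N -> (1 <= k)%N -> ip (e j) (e k) = (j == k)%:R) /\
  (forall x, (forall j, (1 <= j)%N -> ip x (e j) = 0) -> x = 0).

Definition linear_op (A : V -> V) : Prop :=
  forall (a : R) x y, A (a *: x + y) = a *: A x + A y.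

Definition selfadjoint_pos (ip : V -> V -> R) (A : V -> V) : Prop :=
  linear_op A /\ (forall x y, ip (A x) y = ip x (A y)) /\ (forall x, 0 <= ip (A x) x).

Definition trace_class_eigen (ip : V -> V -> R) (Q : V -> V) (e : nat -> V)
    (q : nat -> R) : Prop :=
  [/\ selfadjoint_pos ip Q, orthonormal_basis ip e,
      (forall j, (1 <= j)%N -> 0 < q j /\ Q (e j) = q j *: e j)
    & cvg (series (fun j => q j.+1) @ \oo)].

Definition is_sqrt_op (ip : V -> V -> R) (Q S : V -> V) : Prop :=
  selfadjoint_pos ip S /\ (forall x, S (S x) = Q x).

(** |phi|_{H_0} = |Q^{-1/2} phi| (+oo if phi is not in H_0 = Q^{1/2} H) *)
Definition H0_norm (ip : V -> V -> R) (sqrtQ : V -> V) (phi : V) : \bar R :=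
  ereal_inf [set (ip_norm ip psi)%:E | psi in [set psi | sqrtQ psi = phi]].

Definition Wdot {Omega : Type} (beta : nat -> R -> Omega -> R) (T : R)
    (e : nat -> V) (q : nat -> R) (n : nat) (s : R) (w : Omega) : V :=
  \sum_(1 <= j < n.+1) tbeta_dot beta T n j s w *: (Num.sqrt (q j) *: e j).

End hilbert.

(* Main.v *)
Set Warnings "-all".
Require Import Defs.
From mathcomp Require Import ring lra measurable_realfun.
From HB Require Import structures.
From mathcomp Require Import all_boot all_order all_algebra.
From mathcomp Require Import all_classical all_reals all_analysis.
Import Order.TTheory GRing.Theory Num.Theory.
Import numFieldNormedType.Exports.
Local Open Scope classical_set_scope.
Local Open Scope ring_scope.
Set Implicit Arguments. Unset Strict Implicit. Unset Printing Implicit Defensive.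
Section tail.
Variable R : realType.

Lemma meas_absge (a : R) : measurable [set x : R | (a <= `|x|)%R].
Proof.
have := @measurable_realfun.normr_measurable R setT measurableT _ (measurable_itv `[a, +oo[).
rewrite setTI; congr measurable; apply/seteqP; split => x;
  by rewrite /= in_itv /= andbT.
Qed.

Lemma peak_sqrt2 (s : R) : normal_peak s = Num.sqrt 2 * normal_peak (Num.sqrt 2 * s).
Proof.
rewrite /normal_peak exprMn sqr_sqrtr ?ler0n//.
have -> : 2 * s ^+ 2 * pi *+ 2 = 2 * (s ^+ 2 * pi *+ 2) by rewrite -mulrA mulrnAr.
rewrite (sqrtrM _ (ler0n _ 2)) invfM mulrA divff ?mul1r//.
Qed.

Lemma aux (S X A : R) : 0 < S -> A <= X ->
  - X / (S *+ 2) <= - A / (S *+ 4) + - X / (2 * S *+ 2).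
Proof.
move=> S0 AX.
have e1 : 2 * S *+ 2 = S *+ 4 by rewrite mulr_natl -mulrnA.
have e2 : S *+ 4 = (S *+ 2) * 2 by rewrite mulr_natr -mulrnA.
rewrite e1 e2 invfM !mulrA.
have u0 : 0 < (S *+ 2)^-1 by rewrite invr_gt0 pmulrn_rgt0.
set u := (S *+ 2)^-1 in u0 *.
rewrite -!mulrA -!mulrDl.
rewrite [leRHS]mulrC [leLHS]mulrC -mulrA; apply: ler_wpM2l; first exact: ltW.
rewrite mulrC ler_pdivlMr ?ltr0n//; lra.
Qed.


Lemma pdf_tail (s a x : R) : 0 < s -> 0 <= a -> a <= `|x| ->
  normal_pdf 0 s x <= Num.sqrt 2 * expR (- (a ^+ 2) / (s ^+ 2 *+ 4))
                       * normal_pdf 0 (Num.sqrt 2 * s) x.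
Proof.
move=> s0 a0 ax.
have s0' : Num.sqrt 2 * s != 0 by rewrite mulf_neq0 ?gt_eqF ?sqrtr_gt0 ?ltr0n.
rewrite !normal_pdfE ?gt_eqF// /normal_fun /=.
rewrite peak_sqrt2.
have -> : x - 0 = x by rewrite subr0.
rewrite [leRHS]mulrACA ler_wpM2l ?mulr_ge0 ?sqrtr_ge0 ?normal_peak_ge0//.
rewrite -expRD ler_expR exprMn sqr_sqrtr ?ler0n//.
have s2 : 0 < s ^+ 2 by rewrite exprn_gt0.
have ax2 : a ^+ 2 <= x ^+ 2.
  by rewrite -(real_normK (num_real x)); apply: lerXn2r; rewrite ?nnegrE ?normr_ge0.
exact: aux.
by rewrite mulr_gt0 ?sqrtr_gt0 ?ltr0n.
Qed.

Lemma normal_tail (s a : R) : 0 < s -> 0 <= a ->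
  (normal_prob 0 s [set x | (a <= `|x|)%R] <=
     (Num.sqrt 2 * expR (- (a ^+ 2) / (s ^+ 2 *+ 4)))%:E)%E.
Proof.
move=> s0 a0; set A := [set x | a <= `|x|].
have mA : measurable A by exact: meas_absge.
set C := Num.sqrt 2 * expR (- (a ^+ 2) / (s ^+ 2 *+ 4)).
have C0 : 0 <= C by rewrite mulr_ge0 ?sqrtr_ge0 ?expR_ge0.
rewrite /normal_prob.
apply: (@le_trans _ _ (\int[lebesgue_measure]_(x in A) (C%:E * (normal_pdf 0 (Num.sqrt 2 * s) x)%:E))%E).
  apply: ge0_le_integral => //.
  - by move=> x _; rewrite lee_fin normal_pdf_ge0.
  - by apply/measurable_EFinP; apply: measurable_funTS; exact: measurable_normal_pdf.
  - apply: measurable_funeM; apply/measurable_EFinP; apply: measurable_funTS; exact: measurable_normal_pdf.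
  - by move=> x Ax; rewrite -EFinM lee_fin pdf_tail.
rewrite ge0_integralZl_EFin//; last 2 first.
  - by move=> x _; rewrite lee_fin normal_pdf_ge0.
  - by apply/measurable_EFinP; apply: measurable_funTS; exact: measurable_normal_pdf.
rewrite -[leRHS]mule1 lee_wpmul2l ?lee_fin//.
rewrite -(integral_normal_pdf 0 (Num.sqrt 2 * s)).
apply: ge0_subset_integral => //.
- by apply/measurable_EFinP; exact: measurable_normal_pdf.
- by move=> x _; rewrite lee_fin normal_pdf_ge0.
Qed.

End tail.

Section grid2.
Context {R : realType}.

Definition kidx (T : R) (n : nat) (s : R) : nat := `|Num.floor (s * 2 ^+ n / T)|%N.

Definition Xv {Omega : Type} (beta : nat -> R -> Omega -> R) (T : R) (n j k : nat) (w : Omega) : R :=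
  (2 ^+ n / T) * (beta j (k%:R * (T / 2 ^+ n)) w
                  - beta j (Num.max (k%:R * (T / 2 ^+ n) - T / 2 ^+ n) 0) w).

Lemma kidxE (T : R) n s : 0 < T -> 0 <= s ->
  (kidx T n s)%:R = (Num.floor (s * 2 ^+ n / T))%:~R :> R.
Proof.
move=> T0 s0; rewrite /kidx natr_absz ger0_norm // floor_ge0.
by rewrite divr_ge0 ?mulr_ge0 ?exprn_ge0 // ltW.
Qed.

Lemma tbd_X {Omega : Type} (beta : nat -> R -> Omega -> R) (T : R) n j s w :
  0 < T -> 0 <= s -> tbeta_dot beta T n j s w = Xv beta T n j (kidx T n s) w.
Proof.
by move=> T0 s0; rewrite /tbeta_dot /Xv /grid_prev /grid_lo kidxE.
Qed.

Lemma kidx_le (T : R) n s : 0 < T -> 0 <= s -> s <= T -> (kidx T n s <= 2 ^ n)%N.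
Proof.
move=> T0 s0 sT; rewrite -(ler_nat R) kidxE// natrX.
apply: (le_trans (floor_le _)).
rewrite ler_pdivrMr// mulrC ler_wpM2l ?exprn_ge0//.
Qed.

Lemma Xv0 {Omega : Type} (beta : nat -> R -> Omega -> R) (T : R) n j w :
  0 < T -> Xv beta T n j 0 w = 0.
Proof.
move=> T0; rewrite /Xv mul0r sub0r max_r ?subrr ?mulr0// oppr_le0.
by rewrite divr_ge0 ?exprn_ge0 // ltW.
Qed.

Lemma XvS {Omega : Type} (beta : nat -> R -> Omega -> R) (T : R) n j k w :
  0 < T -> Xv beta T n j k.+1 w =
  (2 ^+ n / T) * (beta j (k.+1%:R * (T / 2 ^+ n)) w - beta j (k%:R * (T / 2 ^+ n)) w).
Proof.
move=> T0; rewrite /Xv (_ : k.+1%:R * _ - _ = k%:R * (T / 2 ^+ n)); last first.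
  by rewrite -natr1 mulrDl mul1r addrK.
rewrite max_l//.
by rewrite mulr_ge0 ?divr_ge0 ?exprn_ge0 // ltW.
Qed.
End grid2.

Section probE.
Context {R : realType}.
Lemma probE d (Omega : measurableType d) (P : probability Omega R) (B : R -> Omega -> R) (T c : R) n k :
  standard_BM P B -> 0 < T -> 0 < c ->
  measurable [set w | c <= `|(2 ^+ n / T) * (B (k.+1%:R * (T / 2 ^+ n)) w - B (k%:R * (T / 2 ^+ n)) w)|] /\
  (P [set w | (c <= `|(2 ^+ n / T) * (B (k.+1%:R * (T / 2 ^+ n)) w - B (k%:R * (T / 2 ^+ n)) w)|)%R] <=
    (Num.sqrt 2 * expR (- (c * (T / 2 ^+ n)) ^+ 2 / ((T / 2 ^+ n) *+ 4)))%:E)%E.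
Proof.
move=> [Bm _ Binc _ _] T0 c0.
have h0 : 0 < T / 2 ^+ n by rewrite divr_gt0 ?exprn_gt0.
rewrite -(invf_div T); set h := T / 2 ^+ n.
set t1 := k.+1%:R * h; set t0 := k%:R * h.
have t00 : 0 <= t0 by rewrite mulr_ge0 ?ler0n // ltW.
have t01 : t0 < t1 by rewrite ltr_pM2r // ltr_nat.
have hEq : [set w | c <= `|h^-1 * (B t1 w - B t0 w)|] =
    (fun w => B t1 w - B t0 w) @^-1` [set x | (c * h <= `|x|)%R].
  have key y : (c <= `|h^-1 * y|) = (c * h <= `|y|).
    by rewrite normrM gtr0_norm ?invr_gt0 // mulrC ler_pdivlMr.
  by apply/seteqP; split => w /=; rewrite key.
have mD : measurable_fun setT (fun w => B t1 w - B t0 w).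
  by apply: measurable_funB; apply: Bm => //; apply: le_trans (ltW t01).
rewrite hEq; split.
  by rewrite -[_ @^-1` _]setTI; apply: mD => //; exact: meas_absge.
rewrite Binc //; last exact: meas_absge.
have -> : t1 - t0 = h by rewrite /t1 /t0 -natr1 mulrDl mul1r addrAC subrr add0r.
apply: le_trans (normal_tail _ _) _; first by rewrite sqrtr_gt0.
  by rewrite mulr_ge0 // ltW.
by rewrite sqr_sqrtr // ltW.
Qed.
End probE.

Section ops.
Context {R : realType} {V : lmodType R} (ip : V -> V -> R).
Hypothesis hip : inner_product ip.

Lemma ipD x y z : ip (x + y) z = ip x z + ip y z.
Proof. by case: hip => _ H _ _; rewrite -[x]scale1r H mul1r scale1r. Qed.
Lemma ip0 z : ip 0 z = 0.
Proof.
have h : ip 0 z + ip 0 z = ip 0 z + 0 by rewrite addr0 -ipD addr0.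
exact: (addrI _ h).
Qed.
Lemma ipZ a x z : ip (a *: x) z = a * ip x z.
Proof. by case: hip => _ H _ _; rewrite -[a *: x]addr0 H ip0 addr0. Qed.
Lemma ipC x y : ip x y = ip y x.
Proof. by case: hip. Qed.
Lemma ipN x z : ip (- x) z = - ip x z.
Proof. by rewrite -scaleN1r ipZ mulN1r. Qed.
Lemma ip_sum (I : Type) (r : seq I) (P : pred I) (F : I -> V) z :
  ip (\sum_(i <- r | P i) F i) z = \sum_(i <- r | P i) ip (F i) z.
Proof. exact: (big_morph (fun x => ip x z) (fun x y => ipD x y z) (ip0 z)). Qed.

Lemma linS (S : V -> V) : linear_op S -> (forall x y, S (x + y) = S x + S y) /\
  (forall a x, S (a *: x) = a *: S x) /\ S 0 = 0.
Proof.
move=> L.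
have SD x y : S (x + y) = S x + S y by have := L 1 x y; rewrite !scale1r.
have S0 : S 0 = 0.
  have h : S 0 + S 0 = S 0 + 0 by rewrite addr0 -SD addr0.
  exact: (addrI _ h).
split; first exact: SD. split; last exact: S0.
by move=> a x; have := L a x 0; rewrite !addr0 S0 addr0.
Qed.

Lemma sqrt_eig (S Q : V -> V) (v : V) (q : R) :
  selfadjoint_pos ip S -> (forall x, S (S x) = Q x) -> 0 < q -> Q v = q *: v ->
  S v = Num.sqrt q *: v.
Proof.
move=> [L [_ Spos]] SS q0 Qv.
have [SD [SZ S0]] := @linS S L.
set r := Num.sqrt q.
have r0 : 0 < r by rewrite sqrtr_gt0.
set y := S v - r *: v.
have Sy : S y + r *: y = 0.
  have SN x : S (- x) = - S x by rewrite -scaleN1r SZ scaleN1r.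
  rewrite /y SD SN SZ SS Qv scalerBr scalerA -expr2 sqr_sqrtr ?ltW//.
  by rewrite addrA subrK subrr.
have : ip (S y + r *: y) y = 0 by rewrite Sy ip0.
rewrite ipD ipZ => /eqP.
have hy0 : 0 <= ip y y by case: hip.
rewrite paddr_eq0; last 2 first; [exact: Spos | exact: mulr_ge0 (ltW r0) hy0 |].
case: hip => _ _ hpos hdef.
rewrite mulf_eq0 (gt_eqF r0) /= => /andP[_ /eqP /hdef y0].
by apply/eqP; rewrite -subr_eq0 -/y y0.
Qed.

Lemma ipCZ a x z : ip x (a *: z) = a * ip x z.
Proof. by rewrite ipC ipZ ipC. Qed.

Lemma Q_inj (Q : V -> V) (e : nat -> V) (q : nat -> R) x :
  trace_class_eigen ip Q e q -> Q x = 0 -> x = 0.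
Proof.
move=> [[_ [Qsa _]] [_ Bas] Eig _] Qx.
apply: Bas => j j1; have [qj Qe] := Eig j j1.
have : ip (Q x) (e j) = 0 by rewrite Qx ip0.
rewrite Qsa Qe ipCZ => /eqP; rewrite mulf_eq0 (gt_eqF qj) /=.
by move/eqP.
Qed.

Lemma S_inj (Q S : V -> V) (e : nat -> V) (q : nat -> R) x y :
  trace_class_eigen ip Q e q -> is_sqrt_op ip Q S -> S x = S y -> x = y.
Proof.
move=> tc [[L _] SS] Sxy.
have [SD [SZ S0]] := @linS S L.
have SN z : S (- z) = - S z by rewrite -scaleN1r SZ scaleN1r.
apply/eqP; rewrite -subr_eq0; apply/eqP; apply: (@Q_inj Q e q (x - y) tc).
by rewrite -SS SD SN Sxy subrr S0.
Qed.

Lemma H0_eq (Q S : V -> V) (e : nat -> V) (q : nat -> R) psi :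
  trace_class_eigen ip Q e q -> is_sqrt_op ip Q S ->
  H0_norm ip S (S psi) = (ip_norm ip psi)%:E.
Proof.
move=> tc sq; rewrite /H0_norm.
rewrite (_ : [set _ | psi0 in _] = [set (ip_norm ip psi)%:E]) ?ereal_inf1//.
apply/seteqP; split => x /=.
  by move=> [p /= Sp <-]; rewrite (@S_inj Q S e q p psi tc sq Sp).
by move=> ->; exists psi.
Qed.

Lemma norm_sum (e : nat -> V) (a : nat -> R) n :
  (forall j k, (1 <= j)%N -> (1 <= k)%N -> ip (e j) (e k) = (j == k)%:R) ->
  ip (\sum_(j < n) a j.+1 *: e j.+1) (\sum_(j < n) a j.+1 *: e j.+1)
  = \sum_(j < n) a j.+1 ^+ 2.
Proof.
move=> on; rewrite ip_sum; apply: eq_bigr => j _.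
rewrite ipZ ipC ip_sum (bigD1 j) //= ipZ on// eqxx mulr1 big1 ?addr0 ?expr2//.
move=> k kj; rewrite ipZ on//.
by rewrite eqSS (inj_eq val_inj) (negbTE kj) mulr0.
Qed.
End ops.

Section misc.
Context {R : realType}.

Lemma fin_max (I : eqType) (g : I -> R) (c : R) (l : seq I) :
  (forall i, i \in l -> g i < c) -> exists2 m, m < c & forall i, i \in l -> g i <= m.
Proof.
elim: l => [|x l IH] H.
  by exists (c - 1) => //; rewrite ltrBlDr ltrDl ltr01.
have [m mc hm] : exists2 m, m < c & forall i, i \in l -> g i <= m.
  by apply: IH => i il; apply: H; rewrite in_cons il orbT.
exists (Num.max (g x) m).
  by rewrite gt_max mc andbT; apply: H; rewrite mem_head.
move=> i; rewrite in_cons => /orP[/eqP -> | il]; first by rewrite le_max lexx.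
by rewrite le_max hm ?orbT.
Qed.

Lemma sup_attained (I : eqType) (D : set I) (g : I -> R) (c : R) :
  finite_set D -> (c%:E <= ereal_sup [set (g i)%:E | i in D])%E ->
  exists2 i, D i & c <= g i.
Proof.
move=> /finite_seqP[s ->] hc.
apply: contrapT => hn.
have H : forall i, i \in s -> g i < c.
  move=> i iS; rewrite ltNge; apply/negP => ci; apply: hn; by exists i.
have [m mc hm] := fin_max H.
have : (ereal_sup [set (g i)%:E | i in [set` s]] <= m%:E)%E.
  by apply: ge_ereal_sup => _ [i /= iS <-]; rewrite lee_fin hm.
move=> /(le_trans hc); rewrite lee_fin => cm.
by move: (lt_le_trans mc cm); rewrite ltxx.
Qed.

Lemma sup_event d (Omega : measurableType d) (I : eqType) (D : set I)
  (g : I -> Omega -> R) (c : R) (S : Omega -> set (\bar R)) :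
  finite_set D -> (forall w, S w = [set (g i w)%:E | i in D]) ->
  [set w | (c%:E <= ereal_sup (S w))%E] = \bigcup_(i in D) [set w | c <= g i w].
Proof.
move=> fD hS; apply/seteqP; split => w /=.
  by rewrite hS => /(sup_attained fD) [i Di ci]; exists i.
move=> [i Di /= ci]; rewrite hS.
apply: (le_trans _ (ereal_sup_ubound _)); last by exists i.
by rewrite lee_fin.
Qed.

Lemma meas_ge d (Omega : measurableType d) (f : Omega -> R) (c : R) :
  measurable_fun setT f -> measurable [set w | c <= f w].
Proof.
move=> mf; have := mf measurableT _ (measurable_itv `[c, +oo[).
rewrite setTI; congr measurable; apply/seteqP; split => x;
  by rewrite /= in_itv /= andbT.
Qed.
End misc.

Section main1.
Context {R : realType} {d : measure_display} {Omega : measurableType d}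
  (P : probability Omega R) (beta : nat -> R -> Omega -> R) (T : R).
Hypothesis hB : indep_std_BMs P beta.
Hypothesis T0 : 0 < T.

Definition Ebox (c : R) n (j k : nat) : set Omega :=
  [set w | c <= `|(2 ^+ n / T) * (beta j.+1 (k.+1%:R * (T / 2 ^+ n)) w
                                  - beta j.+1 (k%:R * (T / 2 ^+ n)) w)|].
Definition Ubox (c : R) n : set Omega :=
  \big[setU/set0]_(j < n) \big[setU/set0]_(k < 2 ^ n) Ebox c n j k.

Lemma sum_constE (m : nat) (x : R) : (\sum_(k < m) x%:E = (m%:R * x)%:E)%E.
Proof. by rewrite sumEFin sumr_const card_ord mulr_natl. Qed.

Lemma Ubox_bound c n : 0 < c -> measurable (Ubox c n) /\
  (P (Ubox c n) <= ((n * 2 ^ n)%N%:R *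
     (Num.sqrt 2 * expR (- (c * (T / 2 ^+ n)) ^+ 2 / ((T / 2 ^+ n) *+ 4))))%:E)%E.
Proof.
move=> c0; set b := Num.sqrt 2 * _.
have BM j : standard_BM P (beta j.+1) by case: hB => H _; apply: H.
have mE j k : measurable (Ebox c n j k) by case: (probE n k (BM j) T0 c0).
have PE j k : (P (Ebox c n j k) <= b%:E)%E by case: (probE n k (BM j) T0 c0).
pose F j := \big[setU/set0]_(k < 2 ^ n) Ebox c n j k.
have mF j : measurable (F j) by apply: bigsetU_measurable => k _; exact: mE.
have mU : measurable (Ubox c n) by apply: bigsetU_measurable => j _; exact: mF.
split => //.
apply: (le_trans (@content_subadditive _ _ _ P (Ubox c n) F n (fun k _ => mF k) mU (@subset_refl _ _))).
apply: (@le_trans _ _ (\sum_(j < n) ((2 ^ n)%N%:R * b)%:E)%E).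
  apply: lee_sum => j _.
  apply: (le_trans (@content_subadditive _ _ _ P (F j) (Ebox c n j) (2 ^ n)%N (fun k _ => mE j k) (mF j) (@subset_refl _ _))).
  by rewrite -sum_constE; apply: lee_sum => k _; exact: PE.
by rewrite sum_constE natrM mulrA.
Qed.
End main1.

Section main2.
Context {R : realType} {d : measure_display} {Omega : measurableType d}
  (P : probability Omega R) (beta : nat -> R -> Omega -> R) (T : R).
Hypothesis hB : indep_std_BMs P beta.
Hypothesis T0 : 0 < T.

Lemma Xv_meas n j k : (1 <= j)%N -> measurable_fun setT (Xv beta T n j k).
Proof.
move=> j1; have [Bm _ _ _ _] : standard_BM P (beta j) by case: hB => H _; apply: H.
have h0 : 0 <= T / 2 ^+ n by rewrite divr_ge0 ?exprn_ge0 // ltW.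
apply: measurable_funM; first exact: measurable_cst.
apply: measurable_funB; apply: Bm; first by rewrite mulr_ge0.
by rewrite le_max lexx orbT.
Qed.

Lemma Emeas n j k c : (1 <= j)%N -> measurable [set w | c <= `|Xv beta T n j k w|].
Proof.
move=> j1; apply: (@meas_ge _ _ _ (fun w => `|Xv beta T n j k w|)).
exact: (measurableT_comp (@measurable_realfun.normr_measurable R setT) (Xv_meas n k j1)).
Qed.

Lemma ev1 n c t : 0 < c -> 0 <= t -> t <= T ->
  let A := [set w | (ereal_sup
         (\bigcup_(j in [set j : nat | (1 <= j <= n)%N])
            [set (`|tbeta_dot beta T n j s w|)%:E | s in [set s : R | (0 <= s <= t)%R]])
         >= c%:E)%E] in
  measurable A /\ A `<=` Ubox beta T c n.
Proof.
move=> c0 t0 tT A.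
pose D1 := [set i : nat * nat | (1 <= i.1 <= n)%N /\ exists2 s, (0 <= s <= t) & kidx T n s = i.2].
have fD : finite_set D1.
  apply: (@sub_finite_set _ _ (`I_n.+1 `*` `I_(2 ^ n).+1)); last first.
    by apply: finite_setX; exact: finite_II.
  move=> [j k] /= [/andP[_ jn] [s /andP[s0 st] ks]]; split => //=.
  rewrite /= in ks *.
  by rewrite -ks ltnS kidx_le // (le_trans st).
pose S1 := fun w => (\bigcup_(j in [set j : nat | (1 <= j <= n)%N])
            [set (`|tbeta_dot beta T n j s w|)%:E | s in [set s : R | (0 <= s <= t)%R]]).
have hS w : S1 w = [set (`|Xv beta T n i.1 i.2 w|)%:E | i in D1].
  apply/seteqP; split => x /=.
    move=> [j Dj [s Ds <-]]; exists (j, kidx T n s) => //=.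
    by split => //; exists s.
    by rewrite tbd_X //; case/andP: Ds.
  move=> [[j k] /= [Dj [s Ds ks]] <-]; exists j => //; exists s => //.
  by case/andP: Ds => s0 _; rewrite /= tbd_X // ks.
have AE : A = \bigcup_(i in D1) [set w | c <= `|Xv beta T n i.1 i.2 w|].
  have H := (sup_event (S := S1) (g := fun i w => `|Xv beta T n i.1 i.2 w|) c fD hS).
  exact: H.
rewrite AE; split.
  apply: fin_bigcup_measurable => // -[j k] /= [/andP[j1 _] _]; exact: Emeas.
move=> w [[j k] /= [/andP[j1 jn] [s /andP[s0 st] ks]] cX].
rewrite /= in ks cX j1 jn.
case: j j1 jn cX => // j _ jn cX.
case: k ks cX => [|k] ks cX.
  by rewrite Xv0 // normr0 in cX; move: (lt_le_trans c0 cX); rewrite ltxx.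
rewrite XvS // in cX.
have kn : (k < 2 ^ n)%N by rewrite -ltnS -ks ltnS kidx_le // (le_trans st).
rewrite /Ubox -(bigcup_mkord n (fun j => \big[setU/set0]_(k < 2 ^ n) Ebox beta T c n j k)).
exists j => //.
by rewrite -(bigcup_mkord (2 ^ n) (fun k => Ebox beta T c n j k)); exists k.
Qed.
End main2.

Lemma S_sum {R : realType} {V : lmodType R} (S : V -> V) (I : Type) (r : seq I) (Pr : pred I) (F : I -> V) :
  linear_op S -> S (\sum_(i <- r | Pr i) F i) = \sum_(i <- r | Pr i) S (F i).
Proof.
move=> L; have [SD [SZ S0]] := linS L.
exact: (big_morph S SD S0).
Qed.

Section main3.
Context {R : realType} {d : measure_display} {Omega : measurableType d}
  (P : probability Omega R) (beta : nat -> R -> Omega -> R) (T : R)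
  (V : lmodType R) (ip : V -> V -> R) (Q sqrtQ : V -> V) (e : nat -> V) (q : nat -> R).
Hypothesis hB : indep_std_BMs P beta.
Hypothesis T0 : 0 < T.
Hypothesis hip : inner_product ip.
Hypothesis tc : trace_class_eigen ip Q e q.
Hypothesis sq : is_sqrt_op ip Q sqrtQ.

Definition hk n k w := Num.sqrt (\sum_(j < n) Xv beta T n j.+1 k w ^+ 2).

Lemma H0_Wdot n s w : 0 <= s ->
  H0_norm ip sqrtQ (Wdot beta T e q n s w) = (hk n (kidx T n s) w)%:E.
Proof.
move=> s0; rewrite /Wdot big_add1 big_mkord /=.
have [[L [Ssa Spos]] SS] := sq.
have [_ [on _] Eig _] := tc.
rewrite (_ : \sum_(i < n) _ = sqrtQ (\sum_(j < n) Xv beta T n j.+1 (kidx T n s) w *: e j.+1)).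
  by rewrite (H0_eq hip _ tc sq) /ip_norm (norm_sum hip (fun j => Xv beta T n j (kidx T n s) w) n on).
rewrite S_sum //; apply: eq_bigr => j _.
have [SD [SZ S0]] := linS L.
have [qj Qe] := Eig j.+1 isT.
by rewrite SZ (sqrt_eig hip (conj L (conj Ssa Spos)) SS qj Qe) tbd_X.
Qed.

Lemma ev2 n c t : (1 <= n)%N -> 0 < c -> 0 <= t -> t <= T ->
  let A := [set w | (ereal_sup [set H0_norm ip sqrtQ (Wdot beta T e q n s w)
        | s in [set s : R | (0 <= s <= t)%R]] >= (Num.sqrt n%:R * c)%:E)%E] in
  measurable A /\ A `<=` Ubox beta T c n.
Proof.
move=> n1 c0 t0 tT A.
set c2 := Num.sqrt n%:R * c.
have c20 : 0 <= c2 by rewrite mulr_ge0 ?sqrtr_ge0 // ltW.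
pose D2 := [set k : nat | exists2 s, (0 <= s <= t) & kidx T n s = k].
have fD : finite_set D2.
  apply: (@sub_finite_set _ _ `I_(2 ^ n).+1); last exact: finite_II.
  by move=> k [s /andP[s0 st] ks] /=; rewrite -ks ltnS kidx_le // (le_trans st).
pose S2 := fun w => [set H0_norm ip sqrtQ (Wdot beta T e q n s w) | s in [set s : R | (0 <= s <= t)%R]].
have hS w : S2 w = [set (hk n k w)%:E | k in D2].
  apply/seteqP; split => x /=.
    move=> [s Ds <-]; exists (kidx T n s); first by exists s.
    by rewrite H0_Wdot //; case/andP: Ds.
  move=> [k [s Ds ks] <-]; exists s => //.
  by case/andP: Ds => s0 _; rewrite H0_Wdot // ks.
have AE : A = \bigcup_(k in D2) [set w | c2 <= hk n k w].
  have H := (sup_event (S := S2) (g := fun k w => hk n k w) c2 fD hS). exact: H.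
have sumge0 k w : 0 <= \sum_(j < n) Xv beta T n j.+1 k w ^+ 2.
  by apply: sumr_ge0 => j _; exact: sqr_ge0.
have hkE k w : (c2 <= hk n k w) = (c2 ^+ 2 <= \sum_(j < n) Xv beta T n j.+1 k w ^+ 2).
  by rewrite /hk -[X in X <= _](ger0_norm c20) -sqrtr_sqr ler_sqrt.
rewrite AE; split.
  apply: fin_bigcup_measurable => // k _.
  rewrite (_ : [set w | _] = [set w | c2 ^+ 2 <= \sum_(j < n) Xv beta T n j.+1 k w ^+ 2]); last first.
    by apply/seteqP; split => w /=; rewrite hkE.
  apply: (@meas_ge _ _ _ (fun w => \sum_(j < n) Xv beta T n j.+1 k w ^+ 2)).
  apply: (@measurable_sum _ _ _ _ _ (index_enum 'I_n) (fun (j : 'I_n) w => Xv beta T n j.+1 k w ^+ 2)) => j.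
  apply: (@measurable_funX _ _ _ _ (Xv beta T n j.+1 k) 2).
  exact: (Xv_meas hB T0).
move=> w [k [s /andP[s0 st] ks] /=]; rewrite hkE => cH.
have [j cj] : exists j : 'I_n, c <= `|Xv beta T n j.+1 k w|.
  case: (pselect (exists j : 'I_n, c <= `|Xv beta T n j.+1 k w|)) => // hn; exfalso.
  have H : forall j : 'I_n, j \in index_enum 'I_n -> `|Xv beta T n j.+1 k w| < c.
    by move=> j _; rewrite ltNge; apply/negP => hj; apply: hn; exists j.
  have [m mc hm] := fin_max H.
  have m0 : 0 <= m.
    have j0 : 'I_n := Ordinal n1.
    exact: le_trans (normr_ge0 _) (hm j0 (mem_index_enum _)).
  have : \sum_(j < n) Xv beta T n j.+1 k w ^+ 2 <= \sum_(j < n) m ^+ 2.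
    apply: ler_sum => j _; rewrite -real_normK ?num_real //.
    by apply: lerXn2r; rewrite ?nnegrE ?normr_ge0 // hm ?mem_index_enum.
  rewrite sumr_const card_ord -mulr_natl => hsum.
  have := le_trans cH hsum.
  rewrite /c2 exprMn sqr_sqrtr ?ler0n // ler_pM2l ?ltr0n // => h2.
  have hlt : m ^+ 2 < c ^+ 2 by rewrite ltrXn2r.
  by move: (lt_le_trans hlt h2); rewrite ltxx.
case: k ks cH cj => [|k] ks cH cj.
  by rewrite Xv0 // normr0 in cj; move: (lt_le_trans c0 cj); rewrite ltxx.
rewrite XvS // in cj.
have kn : (k < 2 ^ n)%N by rewrite -ltnS -ks ltnS kidx_le // (le_trans st).
rewrite /Ubox -(bigcup_mkord n (fun j => \big[setU/set0]_(k < 2 ^ n) Ebox beta T c n j k)).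
exists j => //=.
by rewrite -(bigcup_mkord (2 ^ n) (fun k => Ebox beta T c n j k)); exists k.
Qed.
End main3.

From mathcomp Require Import zify.
Lemma nat_bound n : (n * n.+1 * 2 ^ n <= 10 ^ n)%N.
Proof.
elim: n => // n IH. rewrite !expnS. case: n IH => [|n] IH //. 
move: IH; set X := (2 ^ n.+1)%N; set Y := (10 ^ n.+1)%N => IH. nia.
Qed.
Section lim.
Context {R : realType}.
Lemma bnd_real (K : R) n : 36 < K ->
  (n * 2 ^ n)%N%:R * (Num.sqrt 2 * expR (- (K * n%:R / 4))) <= Num.sqrt 2 * n.+1%:R^-1.
Proof.
move=> K36; rewrite mulrCA ler_wpM2l ?sqrtr_ge0 //.
have e1 : expR (- (K * n%:R / 4)) <= (10%:R ^+ n)^-1.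
  apply: (@le_trans _ _ (expR (- (n%:R * 9)))).
    rewrite ler_expR lerN2 (mulrC K) -mulrA ler_wpM2l ?ler0n //; lra.
  rewrite expRN expRM_natl lef_pV2 ?posrE ?exprn_gt0 ?expR_gt0 ?ltr0n //.
  apply: lerXn2r; rewrite ?nnegrE ?ler0n //.
  by have := expR_ge1Dx (9 : R); lra.
apply: (le_trans (ler_wpM2l (ler0n _ _) e1)).
rewrite ler_pdivrMr ?exprn_gt0 ?ltr0n // [leRHS]mulrC ler_pdivlMr ?ltr0n //.
by rewrite -natrX -!natrM ler_nat mulnAC nat_bound.
Qed.
End lim.

Theorem lemma2p1 :
  exists alpha0 : rat, 0 < alpha0 /\
  forall (R : realType) (d : measure_display) (Omega : measurableType d)
    (P : probability Omega R) (beta : nat -> R -> Omega -> R)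
    (V : lmodType R) (ip : V -> V -> R) (Q sqrtQ : V -> V)
    (e : nat -> V) (q : nat -> R) (T alpha t : R),
    indep_std_BMs P beta ->
    inner_product ip -> trace_class_eigen ip Q e q -> is_sqrt_op ip Q sqrtQ ->
    0 < T -> ratr alpha0 / Num.sqrt T < alpha -> 0 <= t <= T ->
    ((fun n : nat => P [set w | (ereal_sup
         (\bigcup_(j in [set j : nat | (1 <= j <= n)%N])
            [set (`|tbeta_dot beta T n j s w|)%:E | s in [set s : R | (0 <= s <= t)%R]])
         >= (alpha * Num.sqrt n%:R * Num.sqrt (2 ^+ n))%:E)%E]) @ \oo --> 0%E)
    /\
    ((fun n : nat => P [set w | (ereal_sup
         [set H0_norm ip sqrtQ (Wdot beta T e q n s w) | s in [set s : R | (0 <= s <= t)%R]]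
         >= (alpha * n%:R * Num.sqrt (2 ^+ n))%:E)%E]) @ \oo --> 0%E).
Proof.
exists 6%:R; split; first by rewrite ltr0n.
move=> R d Omega P beta V ip Q sqrtQ e q T alpha t hB hip tc sq T0 ha /andP[t0 tT].
rewrite ratr_nat in ha.
have sT0 : 0 < Num.sqrt T by rewrite sqrtr_gt0.
have a0 : 0 < alpha by apply: lt_trans ha; rewrite divr_gt0 ?ltr0n.
have K36 : 36 < alpha ^+ 2 * T.
  have h6 : 6 < alpha * Num.sqrt T by rewrite -ltr_pdivrMr.
  have : 6 ^+ 2 < (alpha * Num.sqrt T) ^+ 2 by rewrite ltrXn2r ?ler0n.
  rewrite exprMn sqr_sqrtr ?ltW // expr2; lra.
pose c1 := fun n : nat => alpha * Num.sqrt n%:R * Num.sqrt (2 ^+ n).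
have c1pos n : (1 <= n)%N -> 0 < c1 n.
  move=> n1; rewrite /c1 !mulr_gt0 ?sqrtr_gt0 ?ltr0n ?exprn_gt0 //.
have Pbound n : (1 <= n)%N ->
    (P (Ubox beta T (c1 n) n) <= (Num.sqrt 2 * n.+1%:R^-1)%:E)%E.
  move=> n1; have [_ PU] := Ubox_bound hB T0 n (c1pos n n1).
  apply: (le_trans PU); rewrite lee_fin.
  have -> : - (c1 n * (T / 2 ^+ n)) ^+ 2 / (T / 2 ^+ n *+ 4) = - (alpha ^+ 2 * T * n%:R / 4).
    rewrite /c1 !exprMn !sqr_sqrtr ?ler0n ?exprn_ge0 //.
    rewrite -mulr_natr; field.
    by rewrite (gt_eqF T0) expf_neq0 // pnatr_eq0.
  exact: bnd_real.
have hcvg : (fun n => (Num.sqrt 2 * n.+1%:R^-1)%:E) @ \oo --> (0 : \bar R).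
  apply: cvg_EFin; first by near=> n.
  rewrite -(mulr0 (Num.sqrt 2)).
  exact: (cvgMl_tmp (a := Num.sqrt 2) cvg_harmonic).
split.
  apply: (@squeeze_cvge _ _ _ _ (fun=> 0%E) _ (fun n => (Num.sqrt 2 * n.+1%:R^-1)%:E)); last 2 first.
  - exact: cvg_cst.
  - exact: hcvg.
  near=> n.
  have n1 : (1 <= n)%N by near: n; exact: nbhs_infty_ge.
  have [mA AU] := ev1 hB T0 n (c1pos n n1) t0 tT.
  apply/andP; split; first exact: measure_ge0.
  apply: le_trans (Pbound n n1).
  apply: le_measure => //; rewrite inE //.
  by have [] := Ubox_bound hB T0 n (c1pos n n1).
apply: (@squeeze_cvge _ _ _ _ (fun=> 0%E) _ (fun n => (Num.sqrt 2 * n.+1%:R^-1)%:E)); last 2 first.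
- exact: cvg_cst.
- exact: hcvg.
near=> n.
have n1 : (1 <= n)%N by near: n; exact: nbhs_infty_ge.
have [mA AU] := ev2 hB T0 hip tc sq n1 (c1pos n n1) t0 tT.
have -> : alpha * n%:R * Num.sqrt (2 ^+ n) = Num.sqrt n%:R * c1 n.
  have sn : Num.sqrt n%:R * Num.sqrt n%:R = n%:R :> R by rewrite -expr2 sqr_sqrtr ?ler0n.
  by rewrite /c1 -{1}sn; ring.
apply/andP; split; first exact: measure_ge0.
apply: le_trans (Pbound n n1).
apply: le_measure => //; rewrite inE //.
by have [] := Ubox_bound hB T0 n (c1pos n n1).
Unshelve. all: by end_near.
Qed.
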